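(* Let $U\in\mathbb{N}$ and $a_1,a_2,b_1,b_2\in\mathbb{Q}_U[\mathbf{i}]$ with $a_1\neq a_2$ and $b_1\neq b_2$. If there exist $\rho,t\in\mathbb{C}$ with $|\rho|=1$ and $b_j=\rho a_j+t$ for $j\in\{1,2\}$, then $\rho\in\mathbb{Q}_{2^{10}U^{16}}[\mathbf{i}]$ and $t\in\mathbb{Q}_{2^{22}U^{35}}[\mathbf{i}]$.
   Context: For $V\in\mathbb{N}$, $\mathbb{Q}_V=\{\pm p/q: p,q\in\{1,\dots,V\}\}\cup\{0\}$ and $\mathbb{Q}_V[\mathbf{i}]=\{x+y\mathbf{i}: x,y\in\mathbb{Q}_V\}$. *)

(* Defs.v *)
From HB Require Import structures.
From mathcomp Require Import all_boot all_order all_algebra.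
From mathcomp Require Import reals.
From mathcomp Require Export complex.
Set Implicit Arguments. Unset Strict Implicit. Unset Printing Implicit Defensive.
Import Order.TTheory GRing.Theory Num.Theory.
Local Open Scope ring_scope.

Definition QV {R : realType} (V : nat) (x : R) : Prop :=
  x = 0 \/
  exists p q : nat, [/\ (1 <= p <= V)%N, (1 <= q <= V)%N &
                     (x = p%:R / q%:R \/ x = - (p%:R / q%:R))].

Definition QVi {R : realType} (V : nat) (z : R[i]) : Prop :=
  exists x y : R, [/\ QV V x, QV V y & z = (x +i* y)%C].

(* Main.v *)
Require Import Defs.
From HB Require Import structures.
From mathcomp Require Import all_boot all_order all_algebra.
From mathcomp Require Import reals.
From mathcomp Require Import complex.
From mathcomp Require Import ring lra.
Import Order.TTheory GRing.Theory Num.Theory.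
Local Open Scope ring_scope.

Section Rep.
Variable R : realType.

Definition rep (A B : int) (x : R) := exists n d : int,
  [/\ 0 < d, d <= B, `|n| <= A & x = n%:~R / d%:~R].

Lemma eqle (a b : int) : a = b -> a <= b.
Proof. by move=> ->. Qed.

Lemma rep_opp A B x : rep A B x -> rep A B (- x).
Proof.
case=> n [d] [d0 dB nA ->]; exists (- n), d; split => //.
  by rewrite normrN.
by rewrite rmorphN /= mulNr.
Qed.

Lemma rep_add A B C D E F x y : rep A B x -> rep C D y ->
  A * D + B * C <= E -> B * D <= F -> rep E F (x + y).
Proof.
case=> n [d] [d0 dB nA ->]; case=> m [e] [e0 eD mC ->] hE hF.
exists (n * e + m * d), (d * e); split.
- by rewrite mulr_gt0.
- apply: (le_trans _ hF); apply: ler_pM => //; exact: ltW.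
- apply: (le_trans _ hE); apply: (le_trans (ler_normD _ _)).
  rewrite !normrM (gtr0_norm d0) (gtr0_norm e0).
  apply: lerD; first by apply: ler_pM => //; exact: ltW.
  by rewrite mulrC; apply: ler_pM => //; exact: ltW.
- have dn : (d%:~R : R) != 0 by rewrite intr_eq0 gt_eqF.
  have en : (e%:~R : R) != 0 by rewrite intr_eq0 gt_eqF.
  rewrite !(rmorphD, rmorphM) /=. field. by rewrite en dn.
Qed.

Lemma rep_mul A B C D E F x y : rep A B x -> rep C D y ->
  A * C <= E -> B * D <= F -> rep E F (x * y).
Proof.
case=> n [d] [d0 dB nA ->]; case=> m [e] [e0 eD mC ->] hE hF.
exists (n * m), (d * e); split.
- by rewrite mulr_gt0.
- apply: (le_trans _ hF); apply: ler_pM => //; exact: ltW.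
- apply: (le_trans _ hE); rewrite normrM; apply: ler_pM => //.
- rewrite !rmorphM /=. by rewrite invfM mulrACA.
Qed.

Lemma rep_div A B C D E F x y : rep A B x -> rep C D y -> y != 0 ->
  A * D <= E -> B * C <= F -> rep E F (x / y).
Proof.
case=> n [d] [d0 dB nA ->]; case=> m [e] [e0 eD mC ->] y0 hE hF.
have dn : (d%:~R : R) != 0 by rewrite intr_eq0 gt_eqF.
have en : (e%:~R : R) != 0 by rewrite intr_eq0 gt_eqF.
have m0 : m != 0 by apply: contraNneq y0 => ->; rewrite mul0r.
have mn : (m%:~R : R) != 0 by rewrite intr_eq0.
have [mge|mlt] := leP 0 m.
- exists (n * e), (d * m); split.
  + by rewrite mulr_gt0 // lt_def m0.
  + apply: (le_trans _ hF); rewrite mulrC [B * C]mulrC.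
    apply: ler_pM => //; [exact: ltW | by rewrite -(ger0_norm mge)].
  + apply: (le_trans _ hE); rewrite normrM (gtr0_norm e0); apply: ler_pM => //; exact: ltW.
  + rewrite !rmorphM /=. field. by rewrite mn dn en.
- exists (- (n * e)), (d * - m); split.
  + by rewrite mulr_gt0 // oppr_gt0.
  + apply: (le_trans _ hF); rewrite mulrC [B * C]mulrC.
    apply: ler_pM => //; [ by rewrite oppr_ge0 ltW | exact: ltW | by rewrite -(ltr0_norm mlt)].
  + apply: (le_trans _ hE); rewrite normrN normrM (gtr0_norm e0); apply: ler_pM => //; exact: ltW.
  + rewrite !(rmorphM, rmorphN) /=. field. by rewrite mn dn en.
Qed.

Lemma rep_QV A B (V : nat) x : rep A B x -> A <= V%:Z -> B <= V%:Z -> QV V x.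
Proof.
case=> n [d] [d0 dB nA ->] AV BV.
case: d d0 dB => // q; rewrite ltz_nat => q0 dB.
have qV : (q <= V)%N by rewrite -lez_nat (le_trans dB).
case: n nA => p nA.
- case: p nA => [|p] nA; first by left; rewrite mul0r.
  right; exists p.+1, q; split.
  + by rewrite /= -lez_nat (le_trans nA).
  + by rewrite q0.
  + by left.
- right; exists p.+1, q; split.
  + by rewrite /= -lez_nat (le_trans nA).
  + by rewrite q0.
  + by right; rewrite NegzE mulrNz mulNr.
Qed.

Lemma QV_rep (U : nat) x : (0 < U)%N -> QV U x -> rep U U x.
Proof.
move=> U0 [->|[p [q [/andP[p1 pU] /andP[q1 qU] h]]]].
  by exists 0, 1; split => //; rewrite ?normr0 ?mul0r // lez_nat.
case: h => ->.
- exists p, q; split => //; by rewrite ?lez_nat ?ltz_nat.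
- exists (- p%:Z), q; split => //; rewrite ?normrN ?lez_nat ?ltz_nat //.
  by rewrite mulrNz mulNr.
Qed.

End Rep.
Arguments rep {R}.
Arguments rep_opp {R A B x}.
Arguments rep_add {R A B C D E F x y}.
Arguments rep_mul {R A B C D E F x y}.
Arguments rep_div {R A B C D E F x y}.
Arguments rep_QV {R A B V x}.
Arguments QV_rep {R U x}.

Lemma bnd_le (U : nat) (c1 c2 : nat) k : (c1 <= c2)%N ->
  (c1%:Z * (U%:Z) ^+ k <= (c2 * U ^ k)%N%:Z).
Proof.
move=> h; rewrite PoszM -[Posz (U ^ k)]natz natrX natz; apply: ler_wpM2r => //; rewrite ?exprn_ge0 // ?lez_nat //.
Qed.

Theorem corollary2p3 (R : realType) (U : nat) (a1 a2 b1 b2 : R[i]) :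
  QVi U a1 -> QVi U a2 -> QVi U b1 -> QVi U b2 ->
  a1 != a2 -> b1 != b2 ->
  forall rho t : R[i], `|rho| = 1 ->
    b1 = rho * a1 + t -> b2 = rho * a2 + t ->
    QVi (2 ^ 10 * U ^ 16) rho /\ QVi (2 ^ 22 * U ^ 35) t.
Proof.
move=> [x1 [y1 [hx1 hy1 ->]]] [x2 [y2 [hx2 hy2 ->]]].
move=> [z1 [w1 [hz1 hw1 ->]]] [z2 [w2 [hz2 hw2 ->]]] a12 _.
case=> r1 r2 [t1 t2] _ [E1 E2] [E3 E4].
have [U0|Upos] := posnP U.
  move: hx1 hx2 hy1 hy2 a12; rewrite U0.
  have h0 : forall x : R, QV 0 x -> x = 0.
    by move=> x [//|[p [q [/andP[p1 p0] _ _]]]]; move: (leq_trans p1 p0).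
  by move=> /h0 -> /h0 -> /h0 -> /h0 ->; rewrite eqxx.
have Ux1 := QV_rep Upos hx1. have Ux2 := QV_rep Upos hx2.
have Uy1 := QV_rep Upos hy1. have Uy2 := QV_rep Upos hy2.
have Uz1 := QV_rep Upos hz1. have Uz2 := QV_rep Upos hz2.
have Uw1 := QV_rep Upos hw1. have Uw2 := QV_rep Upos hw2.
set u := U%:Z.
have Hsub : forall p q : R, rep u u p -> rep u u q -> rep (2 * u ^+ 2) (u ^+ 2) (p - q).
  move=> p q hp hq; apply: rep_add hp (rep_opp hq) _ _; apply: eqle; ring.
have Hu := Hsub _ _ Ux1 Ux2. have Hv := Hsub _ _ Uy1 Uy2.
have Hs := Hsub _ _ Uz1 Uz2. have Hw := Hsub _ _ Uw1 Uw2.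
have Hm : forall p q : R, rep (2 * u ^+ 2) (u ^+ 2) p -> rep (2 * u ^+ 2) (u ^+ 2) q ->
   rep (4 * u ^+ 4) (u ^+ 4) (p * q).
  move=> p q hp hq; apply: rep_mul hp hq _ _; apply: eqle; ring.
have Had : forall p q : R, rep (4 * u ^+ 4) (u ^+ 4) p -> rep (4 * u ^+ 4) (u ^+ 4) q ->
   rep (8 * u ^+ 8) (u ^+ 8) (p + q).
  move=> p q hp hq; apply: rep_add hp hq _ _; apply: eqle; ring.
set X := x1 - x2; set Y := y1 - y2; set Z := z1 - z2; set W := w1 - w2.
have N0 : X * X + Y * Y != 0.
  rewrite -!expr2 paddr_eq0 ?sqr_ge0 // !sqrf_eq0 !subr_eq0.
  apply: contra a12 => /andP[/eqP -> /eqP ->]; by [].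
have HN := Had _ _ (Hm _ _ Hu Hu) (Hm _ _ Hv Hv).
have H1 := Had _ _ (Hm _ _ Hs Hu) (Hm _ _ Hw Hv).
have H2 := Had _ _ (Hm _ _ Hw Hu) (rep_opp (Hm _ _ Hs Hv)).
have Hr1 : rep (8 * u ^+ 16) (8 * u ^+ 16) r1.
  have -> : r1 = (Z * X + W * Y) / (X * X + Y * Y).
    apply: (mulIf N0); rewrite divfK // /Z /W E1 E2 E3 E4 /X /Y; ring.
  apply: rep_div H1 HN N0 _ _; apply: eqle; ring.
have Hr2 : rep (8 * u ^+ 16) (8 * u ^+ 16) r2.
  have -> : r2 = (W * X + - (Z * Y)) / (X * X + Y * Y).
    apply: (mulIf N0); rewrite divfK // /Z /W E1 E2 E3 E4 /X /Y; ring.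
  apply: rep_div H2 HN N0 _ _; apply: eqle; ring.
have Hm2 : forall p q : R, rep (8 * u ^+ 16) (8 * u ^+ 16) p -> rep u u q ->
   rep (8 * u ^+ 17) (8 * u ^+ 17) (p * q).
  move=> p q hp hq; apply: rep_mul hp hq _ _; apply: eqle; ring.
have Ha2 : forall p q : R, rep (8 * u ^+ 17) (8 * u ^+ 17) p -> rep (8 * u ^+ 17) (8 * u ^+ 17) q ->
   rep (128 * u ^+ 34) (64 * u ^+ 34) (p + q).
  move=> p q hp hq; apply: rep_add hp hq _ _; apply: eqle; ring.
have Ha3 : forall p q : R, rep u u p -> rep (128 * u ^+ 34) (64 * u ^+ 34) q ->
   rep (192 * u ^+ 35) (64 * u ^+ 35) (p - q).
  move=> p q hp hq; apply: rep_add hp (rep_opp hq) _ _; apply: eqle; ring.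
have Ht1 : rep (192 * u ^+ 35) (64 * u ^+ 35) t1.
  have -> : t1 = z1 - (r1 * x1 + - (r2 * y1)) by rewrite E1; ring.
  exact: Ha3 Uz1 (Ha2 _ _ (Hm2 _ _ Hr1 Ux1) (rep_opp (Hm2 _ _ Hr2 Uy1))).
have Ht2 : rep (192 * u ^+ 35) (64 * u ^+ 35) t2.
  have -> : t2 = w1 - (r1 * y1 + r2 * x1) by rewrite E2; ring.
  exact: Ha3 Uw1 (Ha2 _ _ (Hm2 _ _ Hr1 Uy1) (Hm2 _ _ Hr2 Ux1)).
split.
- exists r1, r2; split => //; apply: rep_QV; eauto; exact: bnd_le.
- exists t1, t2; split => //; apply: rep_QV; eauto; exact: bnd_le.
Qed.
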